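(* Let $\mathcal{P}$ be a finite poset such that $\mathcal{C}(\mathcal{P})$ is simplicial. Then the matrix of $\mathbf{M}_{\mathcal{P}}^{-1}$ (in the standard basis $\{\mathbf{e}_x\}_{x\in\mathcal{P}}$) has entries $[\mathbf{M}_{\mathcal{P}}^{-1}]_{xy}=1$ if $x=y$, $[\mathbf{M}_{\mathcal{P}}^{-1}]_{xy}=-1$ if $y\lessdot x$, and $[\mathbf{M}_{\mathcal{P}}^{-1}]_{xy}=0$ otherwise. In particular, when $\mathcal{P}=[p]=\{1,\dots,p\}$ is a chain with the standard order, $\mathbf{M}_{\mathcal{P}}^{-1}$ is the $p\times p$ lower bidiagonal Toeplitz matrix with $1$ on the diagonal, $-1$ on the first subdiagonal (entries $(i+1,i)$), and $0$ elsewhere.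
   Context: The order cone $\mathcal{C}(\mathcal{P})\subset\mathbb{R}^{\mathcal{P}}$ is the set of functions $\mathbf{f}$ on $\mathcal{P}$ with $f_x\ge0$ for all $x$ and $f_x\le f_y$ whenever $x\preceq y$. A cone in $\mathbb{R}^p$ is simplicial if it is the conical hull of $p$ linearly independent vectors. $y\lessdot x$ means $x$ covers $y$: $y\prec x$ and there is no $z$ with $y\prec z\prec x$. The Möbius transform $\mathbf{M}_{\mathcal{P}}$ is the linear map on $\mathbb{R}^{\mathcal{P}}$ with $\mathbf{M}_{\mathcal{P}}(\mathbf{e}_x)=\sum_{y:\,x\preceq y}\mathbf{e}_y$. *)

(* Defs.v *)
From HB Require Import structures.
From mathcomp Require Import all_boot all_order all_algebra.
From mathcomp Require Import reals.
Set Implicit Arguments. Unset Strict Implicit. Unset Printing Implicit Defensive.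
Import Order.TTheory GRing.Theory Num.Theory.
Local Open Scope ring_scope.
Local Open Scope order_scope.

Section Defs.
Context {disp : Order.disp_t} {T : finPOrderType disp}.

(* y ⋖ x : x covers y *)
Definition covers (y x : T) : bool :=
  (y < x) && [forall z : T, ~~ ((y < z) && (z < x))].

Context {R : realType}.

Definition order_cone (f : T -> R) : Prop :=
  (forall x, 0 <= f x) /\ (forall x y : T, x <= y -> f x <= f y).

Definition lin_indep (n : nat) (v : 'I_n -> T -> R) : Prop :=
  forall c : 'I_n -> R, (forall x, \sum_(i < n) c i * v i x = 0) ->
    forall i, c i = 0.

Definition in_conical_hull (n : nat) (v : 'I_n -> T -> R) (f : T -> R) : Prop :=
  exists lam : 'I_n -> R, (forall i, 0 <= lam i) /\
    forall x, f x = \sum_(i < n) lam i * v i x.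

Definition simplicial_order_cone : Prop :=
  exists v : 'I_#|T| -> T -> R, lin_indep v /\
    forall f, order_cone f <-> in_conical_hull v f.

(* matrix of the Möbius transform M_P (M_P e_x = sum_{x <= y} e_y) in the
   standard basis, rows/columns indexed via enum_val : 'I_#|T| -> T *)
Definition mobius_mx : 'M[R]_#|T| :=
  \matrix_(i, j) (if enum_val j <= enum_val i then 1 else 0).

End Defs.

(* Main.v *)
Require Import Defs.
From HB Require Import structures.
From mathcomp Require Import all_boot all_order all_algebra.
From mathcomp Require Import reals.
From mathcomp Require Import zify ring lra.
Import Order.TTheory GRing.Theory Num.Theory.
Local Open Scope ring_scope.
Local Open Scope order_scope.

Lemma aux_lra (R : realType) (a b c d : R) : (a + b - c - d = 0)%R -> (0 < c)%R ->
  (a <= 0)%R -> (0 <= d)%R -> (0 <= a)%R -> (0 < b)%R.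
Proof. move=> *. lra. Qed.

Section Aux.
Context {disp : Order.disp_t} {T : finPOrderType disp}.

Lemma exists_cover {a b : T} : a < b -> exists c, (a <= c) && covers c b.
Proof.
move=> ab.
pose P z := (a <= z) && (z < b).
have Pa : P a by rewrite /P lexx ab.
case: (arg_maxnP (fun z => #|[set w | w <= z]|) Pa) => c /andP[ac cb] Hmax.
exists c; rewrite ac /covers cb /=; apply/forallP => z; apply/negP => /andP[cz zb].
have Pz : P z by rewrite /P zb (le_trans ac (ltW cz)).
have := Hmax z Pz; apply/negP; rewrite -ltnNge; apply: proper_card.
apply/properP; split.
  apply/subsetP => w; rewrite !inE => wc; exact: le_trans wc (ltW cz).
exists z; first by rewrite inE.
by rewrite inE; apply/negP => zc; move: (lt_le_trans cz zc); rewrite ltxx.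
Qed.

Context {R : realType}.

Definition Nmx : 'M[R]_#|T| :=
  \matrix_(i, j) (if i == j then 1 else if covers (enum_val j) (enum_val i) then -1 else 0).

Lemma covers_lt {a b : T} : covers a b -> a < b.
Proof. by case/andP. Qed.

Lemma Nmx_mul (Hu : forall a b c : T, covers a c -> covers b c -> a = b) :
  (Nmx *m mobius_mx = 1%:M)%R.
Proof.
apply/matrixP => i k; rewrite !mxE (bigD1 i) //= !mxE eqxx mul1r.
have E : (\sum_(j < #|T| | j != i) Nmx i j * @mobius_mx _ T R j k =
          \sum_(j < #|T| | j != i) (if covers (enum_val j) (enum_val i) then -1 else 0)
              * (if (enum_val k <= enum_val j)%O then 1 else 0))%R.
  by apply: eq_bigr => j ji; rewrite !mxE eq_sym (negbTE ji).
rewrite E; clear E.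
case: (boolP [exists j : 'I_#|T|, covers (enum_val j) (enum_val i) && (enum_val k <= enum_val j)]).
- case/existsP => j0 /andP[cj0 kj0].
  have j0i : j0 != i.
    by apply/negP => /eqP e; move: (covers_lt cj0); rewrite e ltxx.
  rewrite (bigD1 j0) //= cj0 kj0 big1; last first.
    move=> j /andP[ji jj0]; case: ifP => [cj|_]; last by rewrite mul0r.
    by move: jj0; rewrite (enum_val_inj (Hu _ _ _ cj cj0)) eqxx.
  have ki : enum_val k < enum_val i := le_lt_trans kj0 (covers_lt cj0).
  rewrite (ltW ki).
  have -> : (i == k) = false.
    by apply/negP => /eqP e; move: ki; rewrite e ltxx.
  by rewrite mulr1 addr0 subrr.
- rewrite negb_exists => /forallP Hn.
  rewrite big1; last first.
    move=> j _; have := Hn j; rewrite negb_and.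
    case: (covers _ _) => /=; last by rewrite mul0r.
    by move/negbTE => ->; rewrite mulr0.
  rewrite addr0.
  case: (eqVneq i k) => [-> | ik]; first by rewrite lexx.
  case: ifP => // ki.
  have kil : enum_val k < enum_val i.
    rewrite lt_neqAle ki andbT; apply/negP => /eqP e.
    by move: ik; rewrite (enum_val_inj e) eqxx.
  case: (exists_cover kil) => c /andP[kc cc].
  have := Hn (enum_rank c); by rewrite enum_rankK kc cc.
Qed.

Lemma inv_mobius (Hu : forall a b c : T, covers a c -> covers b c -> a = b) :
  invmx (@mobius_mx _ T R) = Nmx.
Proof.
have h := Nmx_mul Hu.
have [Mu _] := mulmx1_unit (mulmx1C h).
by rewrite -[RHS](mulmxK Mu) h mul1mx.
Qed.

Lemma cone_ind (P : pred T) :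
  (forall z z', z <= z' -> P z -> P z') ->
  @order_cone _ T R (fun z => if P z then 1%R else 0%R).
Proof.
move=> HP; split => [z|z z' zz']; first by case: ifP => _; rewrite ?ler01 ?lexx.
case: ifP => Pz; first by rewrite (HP _ _ zz' Pz) lexx.
by case: ifP => _; rewrite ?ler01 ?lexx.
Qed.

Lemma split_cone (v : 'I_#|T| -> T -> R)
  (hull : forall f, order_cone f <-> in_conical_hull v f)
  (f : T -> R) (lam : 'I_#|T| -> R) (l0 : forall i, (0 <= lam i)%R)
  (rf : forall x, f x = (\sum_(i < #|T|) lam i * v i x)%R) (k : 'I_#|T|) :
  order_cone (fun x => lam k * v k x)%R /\ order_cone (fun x => f x - lam k * v k x)%R.
Proof.
split; apply/hull.
  exists (fun i => if i == k then lam k else 0%R); split.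
    by move=> i; case: ifP => _; rewrite ?l0 ?lexx.
  move=> x; rewrite (bigD1 k) //= eqxx big1 ?addr0 // => i /negbTE ->.
  by rewrite mul0r.
exists (fun i => if i == k then 0%R else lam i); split.
  by move=> i; case: ifP => _; rewrite ?l0 ?lexx.
move=> x; rewrite rf (bigD1 k) //= [in RHS](bigD1 k) //= eqxx mul0r add0r addrAC subrr add0r.
by apply: eq_bigr => i /negbTE ->.
Qed.

Lemma core (v : 'I_#|T| -> T -> R) (li : lin_indep v)
  (hull : forall f, order_cone f <-> in_conical_hull v f)
  (y1 y2 x : T) (h1x : y1 <= x) (h2x : y2 <= x) (n12 : ~~ (y1 <= y2))
  (lam1 lamW : 'I_#|T| -> R) (k : 'I_#|T|)
  (l1 : forall i, (0 <= lam1 i)%R) (lW : forall i, (0 <= lamW i)%R)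
  (r1 : forall z, (if y1 <= z then 1%R else 0%R) = (\sum_(i < #|T|) lam1 i * v i z)%R)
  (rW : forall z, (if (y1 <= z) || (y2 <= z) then 1%R else 0%R)
          = (\sum_(i < #|T|) lamW i * v i z)%R)
  (p1 : (0 < lam1 k)%R) (pW : (0 < lamW k)%R) : False.
Proof.
have [[g0 _] [gf0 _]] := split_cone v hull
   (fun z => if y1 <= z then 1%R else 0%R) _ l1 r1 k.
have vy2 : v k y2 = 0%R.
  have a := g0 y2; have b := gf0 y2; move: b; rewrite /= (negbTE n12) sub0r oppr_ge0 => b.
  have : (lam1 k * v k y2 = 0)%R by apply/eqP; rewrite eq_le a b.
  by move/eqP; rewrite mulf_eq0 (gt_eqF p1) /= => /eqP.
have [[h0 hm] [hf0 hfm]] := split_cone v hull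
   (fun z => if (y1 <= z) || (y2 <= z) then 1%R else 0%R) _ lW rW k.
have hy2 : (lamW k * v k y2)%R = 0%R by rewrite vy2 mulr0.
have up : forall y z, y <= z -> ((y1 <= y) || (y2 <= y)) -> (lamW k * v k y)%R = 0%R -> (lamW k * v k z)%R = 0%R.
  move=> y z yz Wy hy.
  have Wz : (y1 <= z) || (y2 <= z).
    by case/orP: Wy => H; rewrite (le_trans H yz) ?orbT.
  have a := hm _ _ yz; have b := hfm _ _ yz; move: b; rewrite /= Wy Wz.
  rewrite lerD2l lerN2 hy => b.
  by apply/eqP; rewrite eq_le b -hy a.
have hx : (lamW k * v k x)%R = 0%R by apply: (up y2) => //; rewrite lexx orbT.
have hy1 : (lamW k * v k y1)%R = 0%R.
  by apply/eqP; rewrite eq_le; apply/andP; split; [rewrite -hx; exact: hm | exact: h0].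
have hz : forall z, (lamW k * v k z)%R = 0%R.
  move=> z; case: (boolP ((y1 <= z) || (y2 <= z))) => Wz.
    by case/orP: Wz => H; [apply: (up y1) | apply: (up y2)]; rewrite ?lexx ?orbT.
  have b := hf0 z; move: b; rewrite /= (negbTE Wz) sub0r oppr_ge0 => b.
  by apply/eqP; rewrite eq_le b; exact: h0.
have vz : forall z, v k z = 0%R.
  move=> z; move: (hz z) => /eqP; rewrite mulf_eq0 (gt_eqF pW) /=.
  by move/eqP.
have Hs : forall z, (\sum_(i < #|T|) (if i == k then 1%R else 0%R) * v i z)%R = 0%R.
  move=> z; rewrite (bigD1 k) //= eqxx mul1r vz add0r big1 // => i /negbTE ->.
  by rewrite mul0r.
have := li _ Hs k; rewrite /= eqxx => H; have := @oner_neq0 R; by rewrite H eqxx.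
Qed.

Lemma simpl_uniq : @simplicial_order_cone disp T R ->
  forall a b c : T, covers a c -> covers b c -> a = b.
Proof.
move=> [v [li hull]] y1 y2 x c1 c2; apply/eqP; apply: contraT => neq.
have x1 := ltW (covers_lt c1); have x2 := ltW (covers_lt c2).
have n12 : ~~ (y1 <= y2).
  apply/negP => le; have lt : y1 < y2 by rewrite lt_neqAle neq le.
  by move: c1 => /andP[_ /forallP /(_ y2)]; rewrite lt (covers_lt c2).
have n21 : ~~ (y2 <= y1).
  apply/negP => le; have lt : y2 < y1 by rewrite lt_neqAle eq_sym neq le.
  by move: c2 => /andP[_ /forallP /(_ y1)]; rewrite lt (covers_lt c1).
have [l1 [l1p r1]] := (hull _).1 (cone_ind (fun z => y1 <= z)
   (fun z z' zz' H => le_trans H zz')).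
have [l2 [l2p r2]] := (hull _).1 (cone_ind (fun z => y2 <= z)
   (fun z z' zz' H => le_trans H zz')).
have [lW [lWp rW]] := (hull _).1 (cone_ind (fun z => (y1 <= z) || (y2 <= z))
   (fun z z' zz' H => match orP H with
        | or_introl h => introT orP (or_introl (le_trans h zz'))
        | or_intror h => introT orP (or_intror (le_trans h zz')) end)).
have [lI [lIp rI]] := (hull _).1 (cone_ind (fun z => (y1 <= z) && (y2 <= z))
   (fun z z' zz' H => let: conj h h' := andP H in
        introT andP (conj (le_trans h zz') (le_trans h' zz')))).
have r1' : forall z, (if y1 <= z then 1%R else 0%R) = (\sum_(i < #|T|) l1 i * v i z)%R := r1.
have r2' : forall z, (if y2 <= z then 1%R else 0%R) = (\sum_(i < #|T|) l2 i * v i z)%R := r2.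
have rW' : forall z, (if (y1 <= z) || (y2 <= z) then 1%R else 0%R) = (\sum_(i < #|T|) lW i * v i z)%R := rW.
have rI' : forall z, (if (y1 <= z) && (y2 <= z) then 1%R else 0%R) = (\sum_(i < #|T|) lI i * v i z)%R := rI.
have Hs : forall z, (\sum_(i < #|T|) (l1 i + l2 i - lW i - lI i) * v i z)%R = 0%R.
  move=> z; under eq_bigr do rewrite !mulrBl mulrDl.
  rewrite !sumrB big_split /= -r1' -r2' -rW' -rI'.
  by case: (y1 <= z); case: (y2 <= z) => /=; ring.
have eqs := li _ Hs.
case: (pickP (fun k => (0 < lW k)%R)) => [k pk | none]; last first.
  have := rW' y1; rewrite lexx /= big1 => [|i _].
    by move=> H; have := @oner_neq0 R; rewrite H eqxx.
  have := lWp i; rewrite le_eqVlt none orbF => /eqP <-; by rewrite mul0r.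
have ek := eqs k; rewrite /= in ek.
case: (boolP (0 < l1 k)%R) => p1.
  by case: (core _ li hull _ _ _ x1 x2 n12 _ _ _ l1p lWp r1' rW' p1 pk).
have p2 : (0 < l2 k)%R.
  have p1' : (l1 k <= 0)%R by move: p1; rewrite ltNge negbK.
  have ek' : (l1 k + l2 k - lW k - lI k = 0)%R := ek.
  have pk' : (0 < lW k)%R := pk.
  exact: (@aux_lra R _ _ _ _ ek' pk' p1' (lIp k) (l1p k)).
have rW'' : forall z, (if (y2 <= z) || (y1 <= z) then 1%R else 0%R) = (\sum_(i < #|T|) lW i * v i z)%R.
  by move=> z; rewrite orbC.
by case: (core _ li hull _ _ _ x2 x1 n21 _ _ _ l2p lWp r2' rW'' p2 pk).
Qed.

End Aux.

Lemma covers_ord (p : nat) (a b : 'I_p) : covers a b = (val b == (val a).+1).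
Proof.
rewrite /covers ltEord /=; apply/idP/idP.
  case/andP => ab /forallP H; apply: contraT => ne.
  have ne' : (nat_of_ord b != (nat_of_ord a).+1) := ne.
  have lt : ((val a).+1 < val b)%N by rewrite ltn_neqAle eq_sym ne'.
  have zp : ((val a).+1 < p)%N := ltn_trans lt (ltn_ord b).
  by have := H (Ordinal zp); rewrite /= ltnSn lt.
move/eqP=> e; have e' : nat_of_ord b = (nat_of_ord a).+1 := e; rewrite e' ltnSn /=; apply/forallP => z.
apply/negP => /andP[h1 h2]; by rewrite ltnS leqNgt h1 in h2.
Qed.

Theorem lemma5 (R : realType) :
  (forall (disp : Order.disp_t) (T : finPOrderType disp),
     @simplicial_order_cone disp T R ->
     forall i j : 'I_#|T|,
       invmx (@mobius_mx disp T R) i j =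
         if i == j then 1
         else if covers (enum_val j) (enum_val i) then -1 else 0)
  /\
  (forall (p : nat) (i j : 'I_#|'I_p|),
     invmx (@mobius_mx _ 'I_p R) i j =
       if val i == val j then 1
       else if val i == (val j).+1 then -1 else 0).
Proof.
split.
  move=> disp T Hs i j; rewrite inv_mobius; first by rewrite mxE.
  exact: simpl_uniq Hs.
move=> p i j; rewrite inv_mobius; last first.
  move=> a b c; rewrite !covers_ord => /eqP h1 /eqP h2; apply: val_inj.
  by move: h1; rewrite h2 => -[].
by rewrite mxE !enum_val_ord covers_ord /= val_eqE.
Qed.
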